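(* Let $n \ge 2$, $k \ge 0$, and let $n_1, \dots, n_k$ be even integers with $1 \le n_i \le 2n-2$. Then $\mathcal{P}_n(n_1,\dots,n_k;-n_k,\dots,-n_1)$ is a regular presentation of $Q_{4n}$.
   Context: $Q_{4n}$ is identified with $\langle x, y \mid x^n y^{-2}, xyxy^{-1} \rangle$. A presentation $\langle x, y \mid x^n y^{-2}, R\rangle$ is regular if $x \mapsto x$, $y \mapsto y$ induces a group isomorphism from the group it presents to $Q_{4n}$. For integers $k\ge0$, $n_1,\dots,n_k,m_1,\dots,m_k$, with $n_{k+1} = 1 - \sum_{i=1}^k n_i$, $m_{k+1} = 1 - \sum_{i=1}^k m_i$, $\mathcal{P}_n(n_1,\dots,n_k;m_1,\dots,m_k) = \langle x, y \mid x^n y^{-2},\ x^{n_1} y x^{m_1} y^{-1} \cdots x^{n_{k+1}} y x^{m_{k+1}} y^{-1} \rangle$; thus here $m_i = -n_{k+1-i}$ for $1 \le i \le k$. *)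

(* Defs.v *)
(* group presentations on two generators x, y, via words in
   the free monoid on x, x^-1, y, y^-1 modulo the congruence generated by
   free cancellation and the relators. *)
From Stdlib Require Import ZArith List.
Import ListNotations.
Open Scope Z_scope.

Inductive gen : Type := GX | GY.

Definition letter : Type := (gen * bool)%type.
Definition word : Type := list letter.

Definition inv_letter (a : letter) : letter := (fst a, negb (snd a)).

Definition x : letter := (GX, false).
Definition xinv : letter := (GX, true).
Definition y : letter := (GY, false).
Definition yinv : letter := (GY, true).

Definition xpow (m : Z) : word :=
  if 0 <=? m then repeat x (Z.to_nat m) else repeat xinv (Z.to_nat (- m)).

Inductive eqv (rels : list word) : word -> word -> Prop :=
| eqv_refl w : eqv rels w w
| eqv_sym u v : eqv rels u v -> eqv rels v u
| eqv_trans u v w : eqv rels u v -> eqv rels v w -> eqv rels u w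
| eqv_free u v a : eqv rels (u ++ a :: inv_letter a :: v) (u ++ v)
| eqv_rel u v r : In r rels -> eqv rels (u ++ r ++ v) (u ++ v).

Definition rel_xn_ym2 (n : Z) : word := xpow n ++ [yinv; yinv].

Definition Q_rels (n : Z) : list word := [rel_xn_ym2 n; [x; y; x; yinv]].

(* < x, y | x^n y^-2, R > is regular: x |-> x, y |-> y induces a group
   isomorphism onto Q_{4n}.  Since the map is the identity on words, it is
   a well-defined homomorphism iff eqv (P-rels) is contained in eqv (Q-rels),
   and then it is surjective, and injective iff the converse inclusion holds. *)
Definition regular (n : Z) (R : word) : Prop :=
  (forall u v, eqv [rel_xn_ym2 n; R] u v -> eqv (Q_rels n) u v) /\
  (forall u v, eqv (Q_rels n) u v -> eqv [rel_xn_ym2 n; R] u v).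

Fixpoint sumZ (l : list Z) : Z :=
  match l with [] => 0 | a :: l' => a + sumZ l' end.

Fixpoint block_word (ab : list (Z * Z)) : word :=
  match ab with
  | [] => []
  | (a, b) :: ab' => xpow a ++ [y] ++ xpow b ++ [yinv] ++ block_word ab'
  end.

(* The second relator of P_n(n_1..n_k; m_1..m_k), with
   n_{k+1} = 1 - sum n_i and m_{k+1} = 1 - sum m_i
   (ns and ms are assumed of the same length k). *)
Definition P_relator (ns ms : list Z) : word :=
  block_word (combine (ns ++ [1 - sumZ ns]) (ms ++ [1 - sumZ ms])).

Definition P_rels (n : Z) (ns ms : list Z) : list word :=
  [rel_xn_ym2 n; P_relator ns ms].

(* Main.v *)
Require Import Defs.
From Stdlib Require Import ZArith List Lia Setoid Morphisms.
Import ListNotations.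
Open Scope Z_scope.

Arguments xpow : simpl never.

#[export] Instance eqv_Equiv rels : Equivalence (eqv rels).
Proof. split; [intro; apply eqv_refl | intros ??; apply eqv_sym | intros ???; apply eqv_trans]. Qed.

Lemma app_l rels w u v : eqv rels u v -> eqv rels (w ++ u) (w ++ v).
Proof.
  induction 1.
  - reflexivity.
  - symmetry; auto.
  - etransitivity; eauto.
  - rewrite !app_assoc. apply eqv_free.
  - rewrite (app_assoc w u (r ++ v)), (app_assoc w u v). apply eqv_rel; auto.
Qed.

Lemma app_r rels w u v : eqv rels u v -> eqv rels (u ++ w) (v ++ w).
Proof.
  induction 1.
  - reflexivity.
  - symmetry; auto.
  - etransitivity; eauto.
  - rewrite <- !app_assoc. simpl. apply eqv_free.
  - rewrite <- !app_assoc. apply eqv_rel; auto.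
Qed.

#[export] Instance app_Proper rels : Proper (eqv rels ==> eqv rels ==> eqv rels) (@app letter).
Proof. intros u u' Hu v v' Hv. transitivity (u' ++ v). apply app_r; auto. apply app_l; auto. Qed.

#[export] Instance cons_Proper rels : Proper (eq ==> eqv rels ==> eqv rels) (@cons letter).
Proof. intros a b <- u v H. exact (app_l rels [a] u v H). Qed.

Lemma cancel1 rels a w : eqv rels (a :: inv_letter a :: w) w.
Proof. exact (eqv_free rels [] w a). Qed.
Lemma cxx' rels w : eqv rels (x :: xinv :: w) w. Proof. exact (cancel1 rels x w). Qed.
Lemma cx'x rels w : eqv rels (xinv :: x :: w) w. Proof. exact (cancel1 rels xinv w). Qed.
Lemma cyy' rels w : eqv rels (y :: yinv :: w) w. Proof. exact (cancel1 rels y w). Qed.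
Lemma cy'y rels w : eqv rels (yinv :: y :: w) w. Proof. exact (cancel1 rels yinv w). Qed.

Definition winv (w : word) : word := rev (map inv_letter w).

Lemma inv_letter_inv a : inv_letter (inv_letter a) = a.
Proof. destruct a as [g b]; unfold inv_letter; simpl; rewrite Bool.negb_involutive; reflexivity. Qed.

Lemma winv_inv w : winv (winv w) = w.
Proof.
  unfold winv. rewrite map_rev, map_map, rev_involutive.
  erewrite map_ext; [apply map_id| intro; apply inv_letter_inv].
Qed.

Lemma winv_app u v : winv (u ++ v) = winv v ++ winv u.
Proof. unfold winv. rewrite map_app, rev_app_distr. reflexivity. Qed.

Lemma right_inv rels w : eqv rels (w ++ winv w) [].
Proof.
  induction w as [|a w IH]; unfold winv in *; simpl.
  - reflexivity.
  - rewrite app_assoc, IH. simpl. apply cancel1.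
Qed.

Lemma left_inv rels w : eqv rels (winv w ++ w) [].
Proof. pose proof (right_inv rels (winv w)) as H. rewrite winv_inv in H. exact H. Qed.

Lemma cancel_r rels u v : eqv rels (u ++ v) [] -> eqv rels u (winv v).
Proof.
  intro H. transitivity (u ++ v ++ winv v).
  { rewrite (right_inv rels v), app_nil_r. reflexivity. }
  rewrite app_assoc, H. reflexivity.
Qed.

Lemma cancel_l rels u v : eqv rels (u ++ v) [] -> eqv rels v (winv u).
Proof.
  intro H. transitivity ((winv u ++ u) ++ v).
  { rewrite (left_inv rels u). reflexivity. }
  rewrite <- app_assoc, H, app_nil_r. reflexivity.
Qed.

Lemma xpow_nonneg a : 0 <= a -> xpow a = repeat x (Z.to_nat a).
Proof. intro H. unfold xpow. rewrite (proj2 (Z.leb_le 0 a) H). reflexivity. Qed.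

Lemma xpow_nonpos a : a <= 0 -> xpow a = repeat xinv (Z.to_nat (-a)).
Proof.
  intro H. unfold xpow. destruct (0 <=? a) eqn:E.
  - apply Z.leb_le in E. assert (a = 0) by lia. subst. reflexivity.
  - reflexivity.
Qed.

Lemma xpow0 : xpow 0 = [].
Proof. reflexivity. Qed.

Lemma xpow_succ rels a : eqv rels (xpow (a+1)) (xpow a ++ [x]).
Proof.
  destruct (Z_le_gt_dec 0 a).
  - rewrite !xpow_nonneg by lia. rewrite Z2Nat.inj_add by lia. rewrite repeat_app. reflexivity.
  - rewrite !xpow_nonpos by lia.
    replace (Z.to_nat (-a)) with (Z.to_nat (-(a+1)) + 1)%nat by lia.
    rewrite repeat_app. rewrite <- app_assoc. simpl. rewrite cx'x, app_nil_r. reflexivity.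
Qed.

Lemma xpow_pred rels a : eqv rels (xpow (a-1)) (xpow a ++ [xinv]).
Proof.
  assert (H := xpow_succ rels (a-1)). replace (a-1+1) with a in H by lia.
  rewrite H, <- app_assoc. simpl. rewrite cxx', app_nil_r. reflexivity.
Qed.

Lemma xpow_add rels a c : eqv rels (xpow a ++ xpow c) (xpow (a + c)).
Proof.
  induction c using Z.peano_ind.
  - rewrite Z.add_0_r, xpow0, app_nil_r. reflexivity.
  - rewrite <- Z.add_1_r. rewrite (xpow_succ rels c), app_assoc, IHc.
    replace (a + (c+1)) with ((a+c)+1) by lia. rewrite (xpow_succ rels (a+c)). reflexivity.
  - rewrite <- Z.sub_1_r. rewrite (xpow_pred rels c), app_assoc, IHc.
    replace (a + (c-1)) with ((a+c)-1) by lia. rewrite (xpow_pred rels (a+c)). reflexivity.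
Qed.

Definition Bw (a : Z) : word := y :: xpow a ++ [yinv].
Arguments Bw : simpl never.

Lemma Bw_add rels a c : eqv rels (Bw a ++ Bw c) (Bw (a + c)).
Proof.
  unfold Bw. cbn [app]. rewrite <- app_assoc. cbn [app]. rewrite cy'y.
  rewrite app_assoc, xpow_add. reflexivity.
Qed.

Lemma Bw0 rels : eqv rels (Bw 0) [].
Proof. unfold Bw. rewrite xpow0. simpl. apply cyy'. Qed.

Lemma Bw_pow rels c d : eqv rels (Bw c) (xpow d) -> forall m, eqv rels (Bw (c*m)) (xpow (d*m)).
Proof.
  intros H m. induction m using Z.peano_ind.
  - rewrite !Z.mul_0_r, Bw0, xpow0. reflexivity.
  - replace (c * Z.succ m) with (c*m + c) by lia. replace (d*Z.succ m) with (d*m+d) by lia.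
    rewrite <- Bw_add, IHm, H, xpow_add. reflexivity.
  - transitivity (Bw (c*Z.pred m) ++ (Bw c ++ xpow (-d))).
    { rewrite H, xpow_add, Z.add_opp_diag_r, xpow0, app_nil_r. reflexivity. }
    rewrite app_assoc, Bw_add. replace (c*Z.pred m + c) with (c*m) by lia.
    rewrite IHm, xpow_add. replace (d*m + -d) with (d*Z.pred m) by lia. reflexivity.
Qed.

Lemma relator rels r : In r rels -> eqv rels r [].
Proof. intro H. pose proof (eqv_rel rels [] [] r H) as e. simpl in e. rewrite app_nil_r in e. exact e. Qed.

Lemma incl_eqv rels1 rels2 : (forall r, In r rels1 -> eqv rels2 r []) ->
  forall u v, eqv rels1 u v -> eqv rels2 u v.
Proof.
  intros H u v E. induction E.
  - reflexivity.
  - symmetry; auto.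
  - etransitivity; eauto.
  - apply eqv_free.
  - rewrite (H r H0). reflexivity.
Qed.

Lemma bw_cons a b L : block_word ((a,b)::L) = xpow a ++ Bw b ++ block_word L.
Proof. cbn [block_word app]. unfold Bw. cbn [app]. rewrite <- app_assoc. reflexivity. Qed.

Lemma bw_app L1 L2 : block_word (L1 ++ L2) = block_word L1 ++ block_word L2.
Proof.
  induction L1 as [|[a b] L1 IH]; [reflexivity|].
  rewrite <- app_comm_cons, !bw_cons, IH, !app_assoc. reflexivity.
Qed.

Fixpoint cblock (L : list (Z*Z)) : word :=
  match L with [] => [] | (a,b)::L' => Bw a ++ xpow b ++ cblock L' end.

Lemma cblock_app L1 L2 : cblock (L1 ++ L2) = cblock L1 ++ cblock L2.
Proof.
  induction L1 as [|[a b] L1 IH]; [reflexivity|].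
  simpl. rewrite IH, !app_assoc. reflexivity.
Qed.

Lemma winv_xpow a : winv (xpow a) = xpow (-a).
Proof.
  destruct (Z_le_gt_dec 0 a).
  - rewrite xpow_nonneg, (xpow_nonpos (-a)) by lia. rewrite Z.opp_involutive.
    unfold winv. rewrite map_repeat, rev_repeat. reflexivity.
  - rewrite xpow_nonpos, (xpow_nonneg (-a)) by lia.
    unfold winv. rewrite map_repeat, rev_repeat. reflexivity.
Qed.

Lemma winv_Bw b : winv (Bw b) = Bw (-b).
Proof.
  change (Bw b) with ([y] ++ xpow b ++ [yinv]). rewrite !winv_app, winv_xpow. reflexivity.
Qed.

Definition sw (p : Z*Z) : Z*Z := (- snd p, - fst p).

Lemma winv_bw L : winv (block_word L) = cblock (map sw (rev L)).
Proof.
  induction L as [|[a b] L IH]; [reflexivity|].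
  rewrite bw_cons, !winv_app, IH, winv_Bw, winv_xpow.
  simpl rev. rewrite map_app, cblock_app. cbn [map cblock sw fst snd]. rewrite app_nil_r, app_assoc. reflexivity.
Qed.

Lemma combine_app (l1 l1' l2 l2' : list Z) : length l1 = length l2 ->
  combine (l1 ++ l1') (l2 ++ l2') = combine l1 l2 ++ combine l1' l2'.
Proof.
  revert l2; induction l1 as [|a l1 IH]; intros [|b l2] H; simpl in *; try discriminate; auto.
  rewrite IH by lia. reflexivity.
Qed.

Lemma rev_combine (l1 l2 : list Z) : length l1 = length l2 ->
  rev (combine l1 l2) = combine (rev l1) (rev l2).
Proof.
  revert l2; induction l1 as [|a l1 IH]; intros [|b l2] H; simpl in *; try discriminate; auto.
  rewrite IH by lia. rewrite combine_app by (rewrite !length_rev; lia). reflexivity.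
Qed.

Lemma map_sw_combine (l1 l2 : list Z) : length l1 = length l2 ->
  map sw (combine l1 l2) = combine (map Z.opp l2) (map Z.opp l1).
Proof.
  revert l2; induction l1 as [|a l1 IH]; intros [|b l2] H; simpl in *; try discriminate; auto.
  rewrite IH by lia. reflexivity.
Qed.

Definition sumd (L : list (Z*Z)) : Z := sumZ (map (fun p => fst p - snd p) L).

Lemma sumd_combine (l1 l2 : list Z) : length l1 = length l2 ->
  sumd (combine l1 l2) = sumZ l1 - sumZ l2.
Proof.
  unfold sumd.
  revert l2; induction l1 as [|a l1 IH]; intros [|b l2] H; simpl in *; try discriminate; auto.
  rewrite IH by lia. lia.
Qed.

Lemma sumZ_app l l' : sumZ (l ++ l') = sumZ l + sumZ l'.
Proof. induction l; simpl; lia. Qed.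

Lemma sumZ_opp_rev l : sumZ (map Z.opp (rev l)) = - sumZ l.
Proof. induction l; simpl; auto. rewrite map_app, sumZ_app. simpl. lia. Qed.

Lemma bw_sum rels L : (forall b, In b (map snd L) -> eqv rels (Bw b) (xpow (-b))) ->
  eqv rels (block_word L) (xpow (sumd L)).
Proof.
  unfold sumd. induction L as [|[a b] L IH]; intro H.
  - reflexivity.
  - rewrite bw_cons, (H b) by (left; reflexivity). rewrite IH by (intros; apply H; right; auto).
    rewrite !xpow_add. simpl. replace (a + (-b + sumZ (map (fun p : Z * Z => fst p - snd p) L)))
      with (a - b + sumZ (map (fun p : Z * Z => fst p - snd p) L)) by lia. reflexivity.
Qed.

Lemma conj_app rels u v :
  eqv rels (y :: (u ++ v) ++ [yinv]) ((y :: u ++ [yinv]) ++ (y :: v ++ [yinv])).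
Proof.
  cbn [app]. rewrite <- !app_assoc. cbn [app]. rewrite cy'y. reflexivity.
Qed.

Lemma sumZ_even l : (forall a, In a l -> Z.Even a) -> Z.Even (sumZ l).
Proof.
  induction l as [|a l IH]; intro H; simpl.
  - exists 0; reflexivity.
  - destruct (H a (or_introl eq_refl)) as [j Hj].
    destruct IH as [k Hk]. { intros; apply H; right; auto. }
    exists (j + k). lia.
Qed.

Lemma P_rel_shape ns ms : length ns = length ms ->
  P_relator ns ms = block_word (combine ns ms) ++ xpow (1 - sumZ ns) ++ Bw (1 - sumZ ms) ++ [].
Proof.
  intro H. unfold P_relator. rewrite combine_app, bw_app by exact H. simpl combine.
  rewrite bw_cons. reflexivity.
Qed.

Lemma dirQ n ns ms : length ns = length ms -> eqv (Q_rels n) (P_relator ns ms) [].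
Proof.
  intro Hl. set (rels := Q_rels n).
  assert (H1 : eqv rels (xpow 1 ++ Bw 1) []).
  { apply relator. right; left; reflexivity. }
  apply cancel_l in H1. rewrite winv_xpow in H1.
  assert (Hb : forall b, eqv rels (Bw b) (xpow (-b))).
  { intro b. pose proof (Bw_pow rels 1 (-1) H1 b) as e. rewrite Z.mul_1_l in e.
    replace (-1 * b) with (-b) in e by lia. exact e. }
  unfold P_relator. rewrite bw_sum by (intros; apply Hb).
  rewrite sumd_combine by (rewrite !length_app; simpl; lia).
  rewrite !sumZ_app. cbn [sumZ]. replace (sumZ ns + (1 - sumZ ns + 0) - (sumZ ms + (1 - sumZ ms + 0))) with 0 by lia.
  reflexivity.
Qed.

Lemma dirP n ns : (forall ni, In ni ns -> Z.Even ni) ->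
  eqv [rel_xn_ym2 n; P_relator ns (map Z.opp (rev ns))] [x; y; x; yinv] [].
Proof.
  intro Hev.
  set (ms := map Z.opp (rev ns)).
  set (R := P_relator ns ms).
  set (rels := [rel_xn_ym2 n; R]).
  set (S := sumZ ns).
  assert (HT : sumZ ms = - S) by apply sumZ_opp_rev.
  assert (Hl : length ns = length ms) by (unfold ms; rewrite length_map, length_rev; reflexivity).
  set (P := block_word (combine ns ms)).
  assert (HR : eqv rels R []) by (apply relator; right; left; reflexivity).
  assert (HRs : R = P ++ xpow (1 - S) ++ Bw (1 - sumZ ms) ++ []) by (apply P_rel_shape; exact Hl).
  rewrite HT in HRs.
  assert (Hrel1 : eqv rels (xpow n ++ [yinv; yinv]) []) by (apply relator; left; reflexivity).
  assert (Hyy : eqv rels (xpow n) [y; y]).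
  { apply cancel_r in Hrel1. exact Hrel1. }
  assert (HyyI : eqv rels [yinv; yinv] (xpow (-n))).
  { apply cancel_l in Hrel1. rewrite winv_xpow in Hrel1. exact Hrel1. }
  assert (conjB : forall b, eqv rels (y :: Bw b ++ [yinv]) (xpow b)).
  { intro b. transitivity ([y;y] ++ xpow b ++ [yinv;yinv]).
    { unfold Bw. cbn [app]. rewrite <- app_assoc. reflexivity. }
    rewrite <- Hyy, HyyI, !xpow_add. replace (n + (b + - n)) with b by lia. reflexivity. }
  assert (conjbw : forall L, eqv rels (y :: block_word L ++ [yinv]) (cblock L)).
  { induction L as [|[a b] L IH].
    - simpl. apply cyy'.
    - rewrite bw_cons, (conj_app rels (xpow a)), (conj_app rels (Bw b)), conjB, IH.
      reflexivity. }
  assert (HwP : winv P = cblock (combine ns ms)).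
  { unfold P. rewrite winv_bw, rev_combine, map_sw_combine by (rewrite ?length_rev; auto).
    unfold ms. f_equal. f_equal.
    rewrite <- map_rev, rev_involutive, map_map.
    rewrite map_ext with (g := fun a => a) by (intro; lia). apply map_id. }
  assert (E1 : eqv rels (P ++ (xpow (1 - S) ++ Bw (1 - - S))) []).
  { rewrite HRs in HR. rewrite app_nil_r in HR. exact HR. }
  apply cancel_r in E1. rewrite winv_app, winv_Bw, winv_xpow in E1.
  assert (E2 : eqv rels (winv P ++ (Bw (1 - S) ++ xpow (1 - - S))) []).
  { transitivity (y :: R ++ [yinv]).
    { rewrite HRs, app_nil_r, (conj_app rels P), (conj_app rels (xpow (1 - S))), conjB.
      change (y :: xpow (1 - S) ++ [yinv]) with (Bw (1 - S)).
      rewrite HwP. unfold P. rewrite conjbw. reflexivity. }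
    rewrite HR. simpl. apply cyy'. }
  apply cancel_l in E2. rewrite winv_inv in E2.
  assert (E3 : eqv rels (Bw (-(1 - - S)) ++ xpow (-(1-S))) (Bw (1-S) ++ xpow (1 - - S)))
    by (rewrite <- E1, E2; reflexivity).
  assert (E4 : eqv rels (Bw (S-1) ++ (Bw (-(1 - - S)) ++ xpow (-(1-S))))
                        (Bw (S-1) ++ (Bw (1-S) ++ xpow (1 - - S)))) by (rewrite E3; reflexivity).
  rewrite !app_assoc, !Bw_add in E4. replace (S-1 + (1-S)) with 0 in E4 by lia.
  rewrite Bw0 in E4. cbn [app] in E4.
  assert (Hm2 : eqv rels (Bw (-2)) (xpow 2)).
  { transitivity (Bw (-2) ++ (xpow (-(1-S)) ++ xpow (1-S))).
    { rewrite xpow_add. replace (-(1-S) + (1-S)) with 0 by lia. rewrite xpow0, app_nil_r. reflexivity. }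
    rewrite app_assoc. replace (-2) with (S-1 + -(1 - -S)) by lia. rewrite E4, xpow_add.
    replace (1 - - S + (1 - S)) with 2 by lia. reflexivity. }
  assert (Hev2 : forall j, eqv rels (Bw (2*j)) (xpow (-(2*j)))).
  { intro j. pose proof (Bw_pow rels (-2) 2 Hm2 (-j)) as e.
    replace (-2 * - j) with (2*j) in e by lia. replace (2 * - j) with (-(2*j)) in e by lia. exact e. }
  assert (HPs : eqv rels P (xpow (2*S))).
  { unfold P. rewrite bw_sum.
    - rewrite sumd_combine by exact Hl. rewrite HT. replace (sumZ ns - - S) with (2*S) by (unfold S; lia).
      reflexivity.
    - intros b Hb. apply in_map_iff in Hb. destruct Hb as [[a b'] [Hb Hin]]. simpl in Hb. subst b'.
      apply in_combine_r in Hin. unfold ms in Hin. apply in_map_iff in Hin.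
      destruct Hin as [a' [Ha' Hin]]. apply in_rev in Hin. destruct (Hev a' Hin) as [j Hj].
      subst b a'. replace (- (2*j)) with (2 * (-j)) by lia. rewrite Hev2. replace (- (2 * - j)) with (-(-(2*j))) by lia.
      reflexivity. }
  assert (HSe : Z.Even S) by (apply sumZ_even; exact Hev).
  destruct HSe as [j0 Hj0].
  assert (HS : eqv rels (Bw (-S)) (xpow S)).
  { replace (-S) with (2 * (-j0)) by lia. rewrite Hev2. replace (-(2 * - j0)) with S by lia. reflexivity. }
  assert (H6 : eqv rels (Bw (-1) ++ xpow S) (Bw (-(1 - - S)))).
  { rewrite <- HS, Bw_add. replace (-1 + - S) with (-(1 - - S)) by lia. reflexivity. }
  assert (H5 : eqv rels (Bw (-1)) (xpow 1)).
  { transitivity ((Bw (-1) ++ xpow S) ++ xpow (-(1-S)) ++ xpow (1 - 2*S)).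
    { rewrite <- app_assoc, (xpow_add rels (-(1-S))), xpow_add.
      replace (S + (-(1-S) + (1 - 2*S))) with 0 by lia. rewrite xpow0, app_nil_r. reflexivity. }
    rewrite H6, app_assoc, <- E1, HPs, xpow_add. replace (2*S + (1 - 2*S)) with 1 by lia. reflexivity. }
  assert (Hb1 : eqv rels (Bw 1) (xpow (-1))).
  { pose proof (Bw_pow rels (-1) 1 H5 (-1)) as e. exact e. }
  change [x; y; x; yinv] with (xpow 1 ++ Bw 1). rewrite Hb1, xpow_add. reflexivity.
Qed.

Theorem theorem3p9 (n : Z) (ns : list Z) :
  2 <= n ->
  (forall ni, In ni ns -> Z.Even ni /\ 1 <= ni <= 2 * n - 2) ->
  regular n (P_relator ns (map Z.opp (rev ns))).
Proof.
  intros _ Hns. split.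
  - apply incl_eqv. intros r Hr. destruct Hr as [<-|[<-|[]]].
    + apply relator. left; reflexivity.
    + apply dirQ. rewrite length_map, length_rev. reflexivity.
  - apply incl_eqv. intros r Hr. destruct Hr as [<-|[<-|[]]].
    + apply relator. left; reflexivity.
    + apply dirP. intros ni H. apply (Hns ni H).
Qed.
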